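(* Let $\mathcal{U}$ be a separable Banach space with dual $\mathcal{U}^*$ and duality pairing $[\cdot,\cdot]$, with quadratic norm $\|u\|^2=[\mathcal{K}^{-1}u,u]$ given by an invertible symmetric positive linear map $\mathcal{K}:\mathcal{U}^*\to\mathcal{U}$. Let $\Omega\subseteq\mathbb{R}^d$ be bounded, consider the PDE $\mathcal{P}(u)(\mathbf{x})=f(\mathbf{x})$ for $\mathbf{x}\in\Omega$, $\mathcal{B}(u)(\mathbf{x})=g(\mathbf{x})$ for $\mathbf{x}\in\partial\Omega$, and suppose (Assumption) there exist bounded linear operators $L_1,\dots,L_Q\in\mathcal{L}(\mathcal{U};C(\Omega))$ with $L_1,\dots,L_{Q_b}\in\mathcal{L}(\mathcal{U};C(\partial\Omega))$ for some $1\le Q_b\le Q$, and maps $P:\mathbb{R}^Q\to\mathbb{R}$, $B:\mathbb{R}^{Q_b}\to\mathbb{R}$ (possibly nonlinear) with $\mathcal{P}(u)(\mathbf{x})=P(L_1(u)(\mathbf{x}),\dots,L_Q(u)(\mathbf{x}))$ for $\mathbf{x}\in\Omega$ and $\mathcal{B}(u)(\mathbf{x})=B(L_1(u)(\mathbf{x}),\dots,L_{Q_b}(u)(\mathbf{x}))$ for $\mathbf{x}\in\partial\Omega$. With collocation points, $\boldsymbol{\phi}$, $N$, $\mathbf{y}$, $F$, $\Theta$ and $\chi_n$ as in the context, assume $\Theta$ is invertible. Then $u^\dagger$ is a minimizer of $$\min_{u\in\mathcal{U}}\|u\|\ \text{ s.t. }\ \mathcal{P}(u)(\mathbf{x}_m)=f(\mathbf{x}_m),\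 m=1,\dots,M_\Omega;\quad \mathcal{B}(u)(\mathbf{x}_m)=g(\mathbf{x}_m),\ m=M_\Omega+1,\dots,M,$$ if and only if $u^\dagger=\sum_{n=1}^N z^\dagger_n\chi_n$ where $\mathbf{z}^\dagger$ is a minimizer of $\min_{\mathbf{z}\in\mathbb{R}^N}\mathbf{z}^T\Theta^{-1}\mathbf{z}$ subject to $F(\mathbf{z})=\mathbf{y}$.
   Context: Collocation points: $\mathbf{x}_1,\dots,\mathbf{x}_{M_\Omega}\in\Omega$, $\mathbf{x}_{M_\Omega+1},\dots,\mathbf{x}_M\in\partial\Omega$. Define $\phi^{(q)}_m=\delta_{\mathbf{x}_m}\circ L_q\in\mathcal{U}^*$ for $1\le m\le M$ if $1\le q\le Q_b$, and for $1\le m\le M_\Omega$ if $Q_b<q\le Q$; let $\boldsymbol{\phi}^{(q)}$ be the vector of the $\phi^{(q)}_m$ and $\boldsymbol{\phi}=(\boldsymbol{\phi}^{(1)},\dots,\boldsymbol{\phi}^{(Q)})\in(\mathcal{U}^* )^{N}$ with $N=MQ_b+M_\Omega(Q-Q_b)$. $\mathbf{y}\in\mathbb{R}^M$ has $y_m=f(\mathbf{x}_m)$ for $m\le M_\Omega$ and $y_m=g(\mathbf{x}_m)$ for $m>M_\Omega$. $F:\mathbb{R}^N\to\mathbb{R}^M$ is defined by $(F([\boldsymbol{\phi},u]))_m=P([\phi^{(1)}_m,u],\dots,[\phi^{(Q)}_m,u])$ for $m\le M_\Omega$ and $=B([\phi^{(1)}_m,u],\dots,[\phi^{(Q_b)}_m,u])$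 for $m>M_\Omega$ (i.e. $F$ acts on $\mathbf{z}\in\mathbb{R}^N$ with entries indexed like $\boldsymbol{\phi}$). $\Theta_{i,n}=[\phi_i,\mathcal{K}\phi_n]$ where $\phi_i$ are the entries of $\boldsymbol{\phi}$, and the gamblets are $\chi_i=\sum_{n=1}^N(\Theta^{-1})_{i,n}\mathcal{K}\phi_n$. The constraints of the minimization problem are thus equivalent to $F([\boldsymbol{\phi},u])=\mathbf{y}$. *)

(* Defs.v *)
From HB Require Import structures.
From mathcomp Require Import all_boot all_order all_algebra.
From mathcomp Require Import all_classical all_reals all_analysis.
Unset Printing Implicit Defensive.
Import Order.TTheory GRing.Theory Num.Theory.
Import numFieldNormedType.Exports.
Local Open Scope classical_set_scope.
Local Open Scope ring_scope.

(* Elements of the topological dual U^*: continuous linear functionals;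
   the duality pairing [phi, u] is function application phi u. *)
Definition is_dual (R : realType) (U : normedModType R) (phi : U -> R) : Prop :=
  (forall (a : R) (u v : U), phi (a *: u + v) = a * phi u + phi v) /\ continuous phi.

Definition bdry (T : topologicalType) (A : set T) : set T :=
  closure A `\` interior A.

(* index list of phi = (phi^(1),...,phi^(Q)): pairs (q, m) (0-based),
   m ranging over [0, M) if q < Qb and over [0, MO) otherwise *)
Definition idxs (Q Qb M MO : nat) : seq (nat * nat) :=
  flatten [seq [seq (q, m) | m <- iota 0 (if (q < Qb)%N then M else MO)] | q <- iota 0 Q].

Definition NN (Q Qb M MO : nat) : nat := size (idxs Q Qb M MO).

Definition phis (R : realType) (U : normedModType R) (d : nat)
  (L : nat -> U -> 'rV[R]_d -> R) (x : nat -> 'rV[R]_d) (Q Qb M MO : nat)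
  (n : nat) : U -> R :=
  let qm := nth (0%N, 0%N) (idxs Q Qb M MO) n in fun u => L qm.1 u (x qm.2).

Definition Theta (R : realType) (U : normedModType R) (d : nat)
  (K : (U -> R) -> U) (L : nat -> U -> 'rV[R]_d -> R) (x : nat -> 'rV[R]_d)
  (Q Qb M MO : nat) : 'M[R]_(NN Q Qb M MO) :=
  \matrix_(i, n) @phis R U d L x Q Qb M MO i (K (@phis R U d L x Q Qb M MO n)).

Definition chi (R : realType) (U : normedModType R) (d : nat)
  (K : (U -> R) -> U) (L : nat -> U -> 'rV[R]_d -> R) (x : nat -> 'rV[R]_d)
  (Q Qb M MO : nat) (i : 'I_(NN Q Qb M MO)) : U :=
  \sum_(n < NN Q Qb M MO) invmx (@Theta R U d K L x Q Qb M MO) i n *: K (@phis R U d L x Q Qb M MO n).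

(* entry of z at a nat index k (0 if out of range) *)
Definition zat (R : realType) (N : nat) (z : 'cV[R]_N) (k : nat) : R :=
  if insub k is Some i then z i ord0 else 0.

Definition Fmap (R : realType) (Q Qb M MO : nat)
  (P : 'rV[R]_Q -> R) (B : 'rV[R]_Qb -> R) (z : 'cV[R]_(NN Q Qb M MO)) (m : nat) : R :=
  if (m < MO)%N then P (\row_(q < Q) @zat R (NN Q Qb M MO) z (index (val q, m) (idxs Q Qb M MO)))
  else B (\row_(q < Qb) @zat R (NN Q Qb M MO) z (index (val q, m) (idxs Q Qb M MO))).

Arguments is_dual {R U}.
Arguments bdry {T}.
Arguments phis {R U d}.
Arguments Theta {R U d}.
Arguments chi {R U d}.
Arguments zat {R N}.
Arguments Fmap {R}.

(* Main.v *)
Require Import Defs.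
From HB Require Import structures.
From mathcomp Require Import all_boot all_order all_algebra.
From mathcomp Require Import all_classical all_reals all_analysis.
From mathcomp Require Import ring lra.
Import Order.TTheory GRing.Theory Num.Theory.
Import numFieldNormedType.Exports.
Local Open Scope classical_set_scope.
Local Open Scope ring_scope.

Lemma dual0 (R : realType) (U : normedModType R) : is_dual (fun _ : U => (0:R)).
Proof. split; [by move=> *; rewrite mulr0 addr0 | exact: cst_continuous]. Qed.

Lemma dual_comb (R : realType) (U : normedModType R) (a : R) (phi psi : U -> R) :
  is_dual phi -> is_dual psi -> is_dual (fun v => a * phi v + psi v).
Proof.
move=> [lp cp] [lq cq]; split.
  by move=> b u v; rewrite lp lq; ring.
move=> v; apply: (@continuousD _ _ _ (fun v => a * phi v) psi); last exact: cq.
apply: (@continuousM _ _ (fun=> a) phi); [exact: cst_continuous| exact: cp].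
Qed.

Lemma dual_sum (R : realType) (U : normedModType R) (I : Type) (r : seq I)
  (a : I -> R) (ph : I -> U -> R) :
  (forall i, is_dual (ph i)) -> is_dual (fun v => \sum_(i <- r) a i * ph i v).
Proof.
move=> hd; elim: r => [|i r IH].
  have -> : (fun v : U => \sum_(i <- [::]) a i * ph i v) = (fun _ => 0).
    by apply: funext => v; rewrite big_nil.
  exact: dual0.
have -> : (fun v : U => \sum_(j <- i :: r) a j * ph j v) =
   (fun v => a i * ph i v + \sum_(j <- r) a j * ph j v).
  by apply: funext => v; rewrite big_cons.
exact: dual_comb.
Qed.

Lemma K_sum (R : realType) (U : normedModType R) (K : (U -> R) -> U) (I : Type)
  (r : seq I) (a : I -> R) (ph : I -> U -> R) :
  (forall (b : R) (phi psi : U -> R), is_dual phi -> is_dual psi ->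
     K (fun v => b * phi v + psi v) = b *: K phi + K psi) ->
  (forall i, is_dual (ph i)) ->
  K (fun v => \sum_(i <- r) a i * ph i v) = \sum_(i <- r) a i *: K (ph i).
Proof.
move=> Kl hd; elim: r => [|i r IH].
  rewrite big_nil.
  have -> : (fun v : U => \sum_(i <- [::]) a i * ph i v) = (fun _ => 0).
    by apply: funext => v; rewrite big_nil.
  have := Kl 1 _ _ (@dual0 R U) (@dual0 R U).
  have -> : (fun v : U => 1 * 0 + 0) = (fun _ => 0 : R).
    by apply: funext => v; rewrite mulr0 addr0.
  rewrite scale1r => h.
  by apply: (addrI (K (fun _ => 0))); rewrite addr0 -h.
have -> : (fun v : U => \sum_(j <- i :: r) a j * ph j v) =
   (fun v => a i * ph i v + \sum_(j <- r) a j * ph j v).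
  by apply: funext => v; rewrite big_cons.
by rewrite Kl ?IH ?big_cons //; apply: dual_sum.
Qed.

Lemma lin_bnd_cont (R : realType) (U : normedModType R) (phi : U -> R) (C : R) :
  (forall a u v, phi (a *: u + v) = a * phi u + phi v) ->
  (forall u, `|phi u| <= C * `|u|) -> continuous phi.
Proof.
move=> lin bnd u.
have phiB v : phi u - phi v = phi (u - v).
  have h := lin (-1) v u; rewrite scaleN1r mulN1r in h.
  by rewrite [u - v]addrC h addrC.
apply/cvgrPdist_lt => e e0.
have C0 : 0 < `|C| + 1 by rewrite ltr_wpDl.
have := @cvgr_dist_lt _ _ _ (nbhs u) _ id u (@cvg_id _ (nbhs u)) _ (divr_gt0 e0 C0).
move=> h; apply: (filterS _ (h _)) => t ht.
rewrite phiB; apply: (le_lt_trans (bnd _)).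
apply: (le_lt_trans (ler_norm _)).
rewrite normrM normr_id.
have h1 : `|C| * `|u - t| <= (`|C| + 1) * `|u - t|.
  by apply: ler_wpM2r => //; rewrite lerDl.
apply: (le_lt_trans h1).
by rewrite -ltr_pdivlMl // mulrC.
Qed.

Lemma idxs_mem Q Qb M MO q m : (q < Q)%N ->
  (m < (if (q < Qb)%N then M else MO))%N -> (q, m) \in idxs Q Qb M MO.
Proof.
move=> hq hm; apply/flatten_mapP; exists q; first by rewrite mem_iota.
by apply/mapP; exists m; rewrite // mem_iota.
Qed.

Lemma idxs_inv Q Qb M MO n : (n < NN Q Qb M MO)%N ->
  let qm := nth (0%N, 0%N) (idxs Q Qb M MO) n in
  (qm.1 < Q)%N /\ (qm.2 < (if (qm.1 < Qb)%N then M else MO))%N.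
Proof.
move=> hn /=; have := mem_nth (0%N, 0%N) hn.
move: (nth _ _ _) => qm /flatten_mapP [q]; rewrite mem_iota => /andP [_ hq].
move=> /mapP [m]; rewrite mem_iota => /andP [_ hm] ->; by rewrite /=; split.
Qed.
Lemma sqle (R : realType) (a b : R) : 0 <= a -> 0 <= b -> (a ^+ 2 <= b ^+ 2) = (a <= b).
Proof. by move=> ha hb; apply: ler_sqr; rewrite nnegrE. Qed.

Lemma dualB (R : realType) (U : normedModType R) (phi : U -> R) u v :
  is_dual phi -> phi (u - v) = phi u - phi v.
Proof.
move=> [lin _]; have h := lin (-1) v u; rewrite scaleN1r mulN1r in h.
by rewrite [u - v]addrC h addrC.
Qed.

Lemma phis_dual (R : realType) (U : normedModType R) (d : nat) (Omega : set 'rV[R]_d)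
  (Q Qb : nat) (L : nat -> U -> 'rV[R]_d -> R) (M MO : nat) (x : nat -> 'rV[R]_d) :
  (forall q, (q < Q)%N ->
     (forall (a : R) (u v : U), L q (a *: u + v) = (fun y => a * L q u y + L q v y)) /\
     (forall u, {within Omega, continuous (L q u)}) /\
     (exists C : R, forall u y, Omega y -> `|L q u y| <= C * `|u|)) ->
  (forall q, (q < Qb)%N ->
     (forall u, {within bdry Omega, continuous (L q u)}) /\
     (exists C : R, forall u y, bdry Omega y -> `|L q u y| <= C * `|u|)) ->
  (forall m, (m < MO)%N -> Omega (x m)) ->
  (forall m, (MO <= m < M)%N -> bdry Omega (x m)) ->
  forall i : 'I_(NN Q Qb M MO), is_dual (phis L x Q Qb M MO i).
Proof.
move=> hL hLb hxO hxB i.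
have := @idxs_inv Q Qb M MO i (ltn_ord i); rewrite /phis /=.
case: (nth _ _ _) => q m /= [hq hm].
have [lin [_ [C1 b1]]] := hL q hq.
have lin' : forall a u v, L q (a *: u + v) (x m) = a * L q u (x m) + L q v (x m).
  by move=> a u v; rewrite lin.
split => //.
case: (ltnP m MO) => hmO.
  by apply: (@lin_bnd_cont _ _ _ C1 lin') => u; apply: b1; apply: hxO.
have hq' : (q < Qb)%N.
  by move: hm; case: ifP => // _; rewrite ltnNge hmO.
have hmM : (m < M)%N by move: hm; rewrite hq'.
have [_ [C2 b2]] := hLb q hq'.
by apply: (@lin_bnd_cont _ _ _ C2 lin') => u; apply: b2; apply: hxB; rewrite hmO hmM.
Qed.

Lemma zat_col (R : realType) (U : normedModType R) (d : nat)
  (Q Qb : nat) (L : nat -> U -> 'rV[R]_d -> R) (M MO : nat) (x : nat -> 'rV[R]_d) (u : U) qm :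
  qm \in idxs Q Qb M MO ->
  zat (\col_(i < NN Q Qb M MO) phis L x Q Qb M MO i u) (index qm (idxs Q Qb M MO))
  = L qm.1 u (x qm.2).
Proof.
move=> hin; rewrite /zat.
have hi : (index qm (idxs Q Qb M MO) < NN Q Qb M MO)%N by rewrite index_mem.
case: insubP => [i _ hv|]; last by rewrite hi.
by rewrite mxE /phis hv nth_index.
Qed.

Lemma Fmap_col (R : realType) (U : normedModType R) (d : nat) (Omega : set 'rV[R]_d)
  (Q Qb : nat) (L : nat -> U -> 'rV[R]_d -> R)
  (P : 'rV[R]_Q -> R) (B : 'rV[R]_Qb -> R)
  (calP calB : U -> 'rV[R]_d -> R) (M MO : nat) (x : nat -> 'rV[R]_d) :
  (Qb <= Q)%N ->
  (forall u y, Omega y -> calP u y = P (\row_(q < Q) L (val q) u y)) ->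
  (forall u y, bdry Omega y -> calB u y = B (\row_(q < Qb) L (val q) u y)) ->
  (MO <= M)%N ->
  (forall m, (m < MO)%N -> Omega (x m)) ->
  (forall m, (MO <= m < M)%N -> bdry Omega (x m)) ->
  forall u m, (m < M)%N ->
  Fmap Q Qb M MO P B (\col_(i < NN Q Qb M MO) phis L x Q Qb M MO i u) m =
  (if (m < MO)%N then calP u (x m) else calB u (x m)).
Proof.
move=> hQb hcalP hcalB hMO hxO hxB u m hm; rewrite /Fmap; case: ifP => hmO.
  rewrite hcalP; last exact: hxO.
  congr P; apply/rowP => q; rewrite !mxE zat_col //.
  by apply: (idxs_mem _ _ _ _ _ _ (ltn_ord q)); case: ifP.
rewrite hcalB; last by apply: hxB; rewrite leqNgt hmO hm.
congr B; apply/rowP => q; rewrite !mxE zat_col //.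
by apply: (idxs_mem _ _ _ _ _ _ (leq_trans (ltn_ord q) hQb)); rewrite ltn_ord.
Qed.
Theorem corollary3p2 (R : realType) (U : completeNormedModType R)
  (K : (U -> R) -> U) (Kinv : U -> (U -> R))
  (d : nat) (Omega : set 'rV[R]_d)
  (Q Qb : nat) (L : nat -> U -> 'rV[R]_d -> R)
  (P : 'rV[R]_Q -> R) (B : 'rV[R]_Qb -> R)
  (calP calB : U -> 'rV[R]_d -> R) (f g : 'rV[R]_d -> R)
  (M MO : nat) (x : nat -> 'rV[R]_d) :
  (* U separable *)
  (exists D : set U, countable D /\ closure D = setT) ->
  (* K : U^* -> U linear, invertible, symmetric, positive *)
  (forall (a : R) (phi psi : U -> R), is_dual phi -> is_dual psi ->
     K (fun v => a * phi v + psi v) = a *: K phi + K psi) ->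
  (forall phi : U -> R, is_dual phi -> Kinv (K phi) = phi) ->
  (forall u : U, is_dual (Kinv u) /\ K (Kinv u) = u) ->
  (forall phi psi : U -> R, is_dual phi -> is_dual psi -> phi (K psi) = psi (K phi)) ->
  (forall phi : U -> R, is_dual phi -> phi <> (fun _ => 0) -> 0 < phi (K phi)) ->
  (* quadratic norm ||u||^2 = [K^{-1} u, u] *)
  (forall u : U, `|u| ^+ 2 = Kinv u u) ->
  (* Omega bounded *)
  bounded_set Omega ->
  (* 1 <= Qb <= Q *)
  (1 <= Qb)%N -> (Qb <= Q)%N ->
  (* L_q in L(U; C(Omega)) for q < Q *)
  (forall q, (q < Q)%N ->
     (forall (a : R) (u v : U), L q (a *: u + v) = (fun y => a * L q u y + L q v y)) /\
     (forall u, {within Omega, continuous (L q u)}) /\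
     (exists C : R, forall u y, Omega y -> `|L q u y| <= C * `|u|)) ->
  (* L_q in L(U; C(boundary Omega)) for q < Qb *)
  (forall q, (q < Qb)%N ->
     (forall u, {within bdry Omega, continuous (L q u)}) /\
     (exists C : R, forall u y, bdry Omega y -> `|L q u y| <= C * `|u|)) ->
  (* structure of the PDE operators *)
  (forall u y, Omega y -> calP u y = P (\row_(q < Q) L (val q) u y)) ->
  (forall u y, bdry Omega y -> calB u y = B (\row_(q < Qb) L (val q) u y)) ->
  (* collocation points *)
  (MO <= M)%N ->
  (forall m, (m < MO)%N -> Omega (x m)) ->
  (forall m, (MO <= m < M)%N -> bdry Omega (x m)) ->
  (* Theta invertible *)
  Theta K L x Q Qb M MO \in unitmx ->
  forall udag : U,
    ((forall m, (m < MO)%N -> calP udag (x m) = f (x m)) /\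
     (forall m, (MO <= m < M)%N -> calB udag (x m) = g (x m)) /\
     (forall u : U,
        (forall m, (m < MO)%N -> calP u (x m) = f (x m)) ->
        (forall m, (MO <= m < M)%N -> calB u (x m) = g (x m)) ->
        `|udag| <= `|u|))
    <->
    (exists zdag : 'cV[R]_(NN Q Qb M MO),
       ((forall m, (m < M)%N ->
           Fmap Q Qb M MO P B zdag m = (if (m < MO)%N then f (x m) else g (x m))) /\
        (forall z : 'cV[R]_(NN Q Qb M MO),
           (forall m, (m < M)%N ->
              Fmap Q Qb M MO P B z m = (if (m < MO)%N then f (x m) else g (x m))) ->
           (zdag^T *m invmx (Theta K L x Q Qb M MO) *m zdag) ord0 ord0
           <= (z^T *m invmx (Theta K L x Q Qb M MO) *m z) ord0 ord0)) /\
       udag = \sum_(n < NN Q Qb M MO) zdag n ord0 *: chi K L x Q Qb M MO n).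
Proof.
move=> _ Klin KinvK Kinv_ok Ksym _ hnorm _ _ hQb hL hLb hcalP hcalB hMO hxO hxB hTh udag.
pose N := NN Q Qb M MO.
pose Th := Theta K L x Q Qb M MO.
pose Ti := invmx Th.
pose zof := fun u : U => \col_(i < N) phis L x Q Qb M MO i u.
pose uof := fun z : 'cV[R]_N => \sum_(n < N) z n ord0 *: chi K L x Q Qb M MO n.
pose qf := fun z : 'cV[R]_N => (z^T *m Ti *m z) ord0 ord0.
pose cons := fun u : U => (forall m, (m < MO)%N -> calP u (x m) = f (x m)) /\
   (forall m, (MO <= m < M)%N -> calB u (x m) = g (x m)).
pose Fc := fun z : 'cV[R]_N => forall m, (m < M)%N ->
   Fmap Q Qb M MO P B z m = (if (m < MO)%N then f (x m) else g (x m)).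
have hd : forall i : 'I_N, is_dual (phis L x Q Qb M MO i).
  exact: (@phis_dual R U d Omega Q Qb L M MO x hL hLb hxO hxB).
have hF := @Fmap_col R U d Omega Q Qb L P B calP calB M MO x hQb hcalP hcalB hMO hxO hxB.
have consF : forall u, cons u <-> Fc (zof u).
  move=> u; split.
    move=> [h1 h2] m hm; rewrite /zof hF //; case: ifP => hmO.
      exact: h1.
    by apply: h2; rewrite leqNgt hmO hm.
  move=> h; split => m hm.
    have := h m (leq_trans hm hMO); rewrite /zof hF ?hm //; exact: leq_trans hm hMO.
  case/andP: hm => hm1 hm2; have := h m hm2; by rewrite /zof hF // ltnNge hm1.
pose c := fun z : 'cV[R]_N => fun n : 'I_N => (Ti^T *m z) n ord0.
pose psi := fun z : 'cV[R]_N => fun v : U => \sum_(n < N) c z n * phis L x Q Qb M MO n v.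
have psid : forall z, is_dual (psi z) by move=> z; exact: dual_sum.
have uofK : forall z, uof z = K (psi z).
  move=> z; rewrite /psi K_sum // /uof /chi.
  under eq_bigr do rewrite scaler_sumr.
  rewrite exchange_big /=; apply: eq_bigr => k _; rewrite /c mxE scaler_suml.
  by apply: eq_bigr => n _; rewrite scalerA !mxE mulrC.
have zof_uof : forall z, zof (uof z) = z.
  move=> z; apply/colP => j; rewrite mxE uofK Ksym //.
  have {2}-> : z = (Ti *m Th)^T *m z by rewrite mulVmx // trmx1 mul1mx.
  rewrite trmx_mul -mulmxA mxE /psi; apply: eq_bigr => n _.
  by rewrite /c !mxE mulrC.
have dec : forall u, `|u| ^+ 2 = qf (zof u) + `|u - uof (zof u)| ^+ 2.
  move=> u; pose z := zof u; pose w := u - uof z.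
  have [dw Kw] := Kinv_ok w.
  have hu : u = K (fun v => 1 * psi z v + Kinv w v).
    by rewrite Klin // scale1r -uofK Kw /w addrC subrK.
  have hu2 : u = 1 *: K (psi z) + w by rewrite scale1r -uofK /w addrC subrK.
  rewrite !hnorm -/z -/w.
  have -> : Kinv u = fun v => 1 * psi z v + Kinv w v.
    by rewrite {1}hu KinvK //; exact: dual_comb.
  rewrite /= mul1r.
  have e1 : psi z u = qf z.
    rewrite /qf /psi mxE; apply: eq_bigr => n _; rewrite /z /zof mxE; congr (_ * _); last by rewrite mxE.
    by rewrite /c !mxE; apply: eq_bigr => k _; rewrite !mxE mulrC.
  have e2 : Kinv w u = Kinv w w.
    rewrite {1}hu2 (proj1 dw) Ksym // Kw.
    suff -> : psi z w = 0 by rewrite mul1r add0r.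
    rewrite /psi big1 // => n _.
    have := congr1 (fun A : 'cV[R]_N => A n ord0) (zof_uof z).
    rewrite /w dualB // /zof /z !mxE => ->; by rewrite subrr mulr0.
  by rewrite e1 e2.
have quof : forall z, `|uof z| ^+ 2 = qf z.
  by move=> z; rewrite dec zof_uof subrr normr0 expr0n /= addr0.
split.
- move=> [h1 [h2 hmin]].
  have cu : cons udag by split.
  have Fu : Fc (zof udag) by apply/consF.
  have cz : forall z, Fc z -> cons (uof z) by move=> z Fz; apply/consF; rewrite zof_uof.
  have le2 : forall z, Fc z -> `|udag| ^+ 2 <= qf z.
    move=> z Fz; have [c1 c2] := cz z Fz; rewrite -quof sqle //; exact: hmin.
  exists (zof udag); split; first split.
  + exact: Fu.
  + move=> z Fz; apply: le_trans (le2 z Fz).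
    by rewrite dec lerDl sqr_ge0.
  + change (udag = uof (zof udag)).
    have := le2 _ Fu; rewrite dec gerDl => hw.
    have : `|udag - uof (zof udag)| ^+ 2 = 0 by apply/eqP; rewrite eq_le hw sqr_ge0.
    move/eqP; rewrite sqrf_eq0 normr_eq0 subr_eq0 => /eqP //.
- move=> [zd [[Fzd hmin] ->]].
  have cu : cons (uof zd) by apply/consF; rewrite zof_uof.
  have [c1 c2] := cu; split; first exact: c1; split; first exact: c2.
  move=> u h1 h2.
  have Fu : Fc (zof u) by apply/consF.
  rewrite -sqle // quof (le_trans (hmin _ Fu)) // dec lerDl sqr_ge0 //.
Qed.
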